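(* Let $X$ be a compact metric space with metric $d$ and let $f\colon X\to X$ be a continuous map. If $f$ has the $L$-Lipschitz shadowing property for some $0<L<1/2$, then $CR(f)=\overline{Per(f)}$.
   Context: For $\delta>0$, a sequence $(x_i)_{i\ge0}$ in $X$ is a $\delta$-pseudo orbit of $f$ if $d(f(x_i),x_{i+1})\le\delta$ for all $i\ge0$; it is $\epsilon$-shadowed by $x$ if $d(f^i(x),x_i)\le\epsilon$ for all $i\ge0$. For $L>0$, $f$ has the $L$-Lipschitz shadowing property if there is $\delta_0>0$ such that for every $0<\delta\le\delta_0$, every $\delta$-pseudo orbit of $f$ is $L\delta$-shadowed by some point of $X$. A $\delta$-chain is a finite sequence $(x_i)_{i=0}^k$, $k\ge1$, with $d(f(x_i),x_{i+1})\le\delta$ for $0\le i\le k-1$; it is a $\delta$-cycle if $x_0=x_k$. $CR(f)$ is the set of $x\in X$ such that for every $\delta>0$ there is a $\delta$-cycle $(x_i)_{i=0}^k$ with $x_0=x_k=x$. $Per(f)=\bigcup_{i>0}\{x\in X: f^i(x)=x\}$. *)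

(* Defs.v *)
From Stdlib Require Import Reals.
Open Scope R_scope.

Definition is_metric {X : Type} (d : X -> X -> R) : Prop :=
  (forall x y, 0 <= d x y) /\
  (forall x y, d x y = 0 <-> x = y) /\
  (forall x y, d x y = d y x) /\
  (forall x y z, d x z <= d x y + d y z).

Definition m_open {X : Type} (d : X -> X -> R) (U : X -> Prop) : Prop :=
  forall x, U x -> exists r, 0 < r /\ forall y, d x y < r -> U y.

Definition m_compact {X : Type} (d : X -> X -> R) : Prop :=
  forall (I : Type) (U : I -> X -> Prop),
    (forall i, m_open d (U i)) ->
    (forall x, exists i, U i x) ->
    exists l : list I, forall x, exists i, List.In i l /\ U i x.

Definition m_continuous {X : Type} (d : X -> X -> R) (f : X -> X) : Prop :=
  forall x eps, 0 < eps -> exists delta, 0 < delta /\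
    forall y, d x y < delta -> d (f x) (f y) < eps.

Definition pseudo_orbit {X : Type} (d : X -> X -> R) (f : X -> X)
  (delta : R) (xs : nat -> X) : Prop :=
  forall i, d (f (xs i)) (xs (S i)) <= delta.

Definition shadows {X : Type} (d : X -> X -> R) (f : X -> X)
  (eps : R) (x : X) (xs : nat -> X) : Prop :=
  forall i, d (Nat.iter i f x) (xs i) <= eps.

Definition lipschitz_shadowing {X : Type} (d : X -> X -> R) (f : X -> X)
  (L : R) : Prop :=
  exists delta0, 0 < delta0 /\
    forall delta, 0 < delta -> delta <= delta0 ->
      forall xs, pseudo_orbit d f delta xs ->
        exists x, shadows d f (L * delta) x xs.

Definition delta_cycle_at {X : Type} (d : X -> X -> R) (f : X -> X)
  (delta : R) (x : X) : Prop :=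
  exists (k : nat) (xs : nat -> X), (1 <= k)%nat /\ xs 0%nat = x /\ xs k = x /\
    forall i, (i < k)%nat -> d (f (xs i)) (xs (S i)) <= delta.

Definition CR {X : Type} (d : X -> X -> R) (f : X -> X) (x : X) : Prop :=
  forall delta, 0 < delta -> delta_cycle_at d f delta x.

Definition Per {X : Type} (f : X -> X) (x : X) : Prop :=
  exists i : nat, (0 < i)%nat /\ Nat.iter i f x = x.

Definition m_closure {X : Type} (d : X -> X -> R) (A : X -> Prop) (x : X) : Prop :=
  forall eps, 0 < eps -> exists y, A y /\ d x y < eps.

(* Main.v *)
Require Import Defs.
From Stdlib Require Import Reals Lra Lia ClassicalEpsilon Classical.
Open Scope R_scope.

Lemma mod_succ_cases (i k : nat) : (1 <= k)%nat ->
  (S (i mod k) < k /\ (S i) mod k = S (i mod k))%nat \/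
  (i mod k = k - 1 /\ (S i) mod k = 0)%nat.
Proof.
  intros Hk.
  assert (Hd := Nat.div_mod i k ltac:(lia)).
  assert (Hr := Nat.mod_upper_bound i k ltac:(lia)).
  destruct (Nat.lt_ge_cases (S (i mod k)) k) as [H|H].
  - left. split; [exact H|].
    symmetry. apply (Nat.mod_unique _ _ (i / k)); lia.
  - right. split; [lia|].
    symmetry. apply (Nat.mod_unique _ _ (S (i / k))); lia.
Qed.

Lemma metric_self {X} (d : X -> X -> R) : is_metric d -> forall x, d x x = 0.
Proof. intros (_&H&_) x. apply H. reflexivity. Qed.

Lemma cyc_pseudo {X} (d : X -> X -> R) (f : X -> X) (k : nat) (c : nat -> X) (s : R) :
  (1 <= k)%nat ->
  (forall j, (S j < k)%nat -> d (f (c j)) (c (S j)) <= s) ->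
  d (f (c (k - 1)%nat)) (c 0%nat) <= s ->
  pseudo_orbit d f s (fun i => c (i mod k)%nat).
Proof.
  intros Hk H1 H2 i. simpl.
  destruct (mod_succ_cases i k Hk) as [[Ha Hb]|[Ha Hb]]; rewrite Hb.
  - apply H1; exact Ha.
  - rewrite Ha. exact H2.
Qed.

Lemma shadow_cycle {X} (d : X -> X -> R) (f : X -> X) (k : nat) (c : nat -> X) (e : R) z :
  (1 <= k)%nat -> shadows d f e z (fun i => c (i mod k)%nat) ->
  d z (c 0%nat) <= e /\ d (Nat.iter k f z) (c 0%nat) <= e.
Proof.
  intros Hk Hs. split.
  - specialize (Hs 0%nat). cbv beta in Hs. rewrite Nat.Div0.mod_0_l in Hs. exact Hs.
  - specialize (Hs k). cbv beta in Hs. rewrite Nat.Div0.mod_same in Hs. exact Hs.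
Qed.

Lemma iter_cont {X} (d : X -> X -> R) (f : X -> X) :
  m_continuous d f -> forall k, m_continuous d (fun y => Nat.iter k f y).
Proof.
  intros Hf k. induction k as [|k IH]; intros x eps He.
  - exists eps. split; [exact He|]. simpl. auto.
  - destruct (Hf (Nat.iter k f x) eps He) as [eta [Heta Hf']].
    destruct (IH x eta Heta) as [dl [Hdl Hi]].
    exists dl. split; [exact Hdl|]. intros y Hy. simpl. apply Hf'. apply Hi. exact Hy.
Qed.

Lemma geom_bound {X} (d : X -> X -> R) (z : nat -> X) (C q : R) :
  is_metric d -> 0 <= C -> 0 <= q < 1 ->
  (forall n, d (z n) (z (S n)) <= C * q ^ n) ->
  forall j n, d (z n) (z (n + j)%nat) <= C * q ^ n / (1 - q).
Proof.
  intros Hm HC Hq Hs j. induction j as [|j IH]; intros n.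
  - rewrite Nat.add_0_r, (metric_self d Hm).
    apply Rmult_le_pos; [apply Rmult_le_pos; [lra|apply pow_le; lra]|].
    apply Rlt_le, Rinv_0_lt_compat; lra.
  - destruct Hm as (H0&H1&H2&H3).
    eapply Rle_trans. apply (H3 _ (z (S n))).
    replace (n + S j)%nat with (S n + j)%nat by lia.
    eapply Rle_trans. apply Rplus_le_compat. apply Hs. apply IH.
    simpl. right. field. lra.
Qed.

Record ball_ix {X} (d : X -> X -> R) (z : nat -> X) := BIx {
  bc : X; br : R; bN : nat; brpos : 0 < br;
  bfar : forall m, (bN <= m)%nat -> br <= d (z m) bc }.

Lemma list_max {A} (g : A -> nat) (l : list A) :
  exists M, forall a, List.In a l -> (g a <= M)%nat.
Proof.
  induction l as [|a l [M HM]].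
  - exists 0%nat. intros a [].
  - exists (Nat.max (g a) M). intros b [->|Hb]; [lia|]. specialize (HM b Hb). lia.
Qed.

Lemma complete {X} (d : X -> X -> R) (z : nat -> X) :
  is_metric d -> m_compact d ->
  (forall e, 0 < e -> exists N, forall n j, (N <= n)%nat -> d (z n) (z (n + j)%nat) < e) ->
  exists p, forall e, 0 < e -> exists N, forall n, (N <= n)%nat -> d (z n) p < e.
Proof.
  intros Hm Hc Hcau.
  assert (Hcs : forall e, 0 < e -> exists N, forall n m, (N <= n)%nat -> (N <= m)%nat -> d (z n) (z m) < e).
  { intros e He. destruct (Hcau e He) as [N HN]. exists N. intros n m Hn Hmm.
    destruct (Nat.le_ge_cases n m).
    - replace m with (n + (m - n))%nat by lia. apply HN; lia.
    - destruct Hm as (_&_&Hsym&_). rewrite Hsym.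
      replace n with (m + (n - m))%nat by lia. apply HN; lia. }
  apply NNPP. intro Hno.
  assert (Hfar : forall y, exists r N, 0 < r /\ forall m, (N <= m)%nat -> r <= d (z m) y).
  { intro y. apply NNPP. intro Hy. apply Hno. exists y. intros e He.
    destruct (Hcs (e/2) ltac:(lra)) as [Nc HNc]. exists Nc. intros n Hn.
    assert (Hex : exists m, (Nc <= m)%nat /\ d (z m) y < e/2).
    { apply NNPP. intro Hm'. apply Hy. exists (e/2), Nc. split; [lra|].
      intros m Hmm. apply Rnot_lt_le. intro Hlt. apply Hm'. exists m. auto. }
    destruct Hex as [m [Hmm Hd]].
    destruct Hm as (_&_&_&Htri).
    eapply Rle_lt_trans. apply (Htri _ (z m)).
    specialize (HNc n m Hn Hmm). lra. }
  destruct Hm as (Hpos&Hid&Hsym&Htri).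
  destruct (Hc (ball_ix d z) (fun i u => d (bc _ _ i) u < br _ _ i)) as [l Hl].
  - intros i u Hu. exists (br _ _ i - d (bc _ _ i) u). split; [lra|].
    intros v Hv. specialize (Htri (bc _ _ i) u v). lra.
  - intro u. destruct (Hfar u) as [r [N [Hr HN]]].
    exists (BIx _ d z u r N Hr HN). simpl.
    assert (d u u = 0) by (apply Hid; reflexivity). lra.
  - destruct (list_max (bN _ _) l) as [M HM].
    destruct (Hl (z M)) as [i [Hi Hu]].
    pose proof (bfar _ _ i M (HM i Hi)). rewrite Hsym in Hu. lra.
Qed.

Lemma step {X} (d : X -> X -> R) (f : X -> X) (L dl0 : R) (k : nat) :
  is_metric d -> (1 <= k)%nat ->
  (forall delta, 0 < delta -> delta <= dl0 ->
      forall xs, pseudo_orbit d f delta xs -> exists x, shadows d f (L * delta) x xs) ->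
  forall s y, 0 < s -> s <= dl0 -> d (Nat.iter k f y) y <= s ->
  exists y', d (Nat.iter k f y') y' <= 2 * L * s /\ d y' y <= L * s.
Proof.
  intros Hm Hk Hsh s y Hs Hs0 Hy.
  assert (Hp : pseudo_orbit d f s (fun i => (fun j => Nat.iter j f y) (i mod k)%nat)).
  { apply cyc_pseudo; [exact Hk| |].
    - intros j _. simpl. rewrite (metric_self d Hm). lra.
    - change (d (f (Nat.iter (k - 1) f y)) y <= s).
      replace (f (Nat.iter (k - 1) f y)) with (Nat.iter k f y). exact Hy.
      destruct k; [lia|]. simpl. rewrite Nat.sub_0_r. reflexivity. }
  destruct (Hsh s Hs Hs0 _ Hp) as [y' Hy'].
  destruct (shadow_cycle d f k _ _ y' Hk Hy') as [A B]. simpl in A, B.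
  exists y'. split; [|exact A].
  destruct Hm as (_&_&Hsym&Htri).
  eapply Rle_trans. apply (Htri _ y). rewrite (Hsym y y'). lra.
Qed.

Lemma pow_le1 (q : R) n : 0 <= q <= 1 -> q ^ n <= 1.
Proof. intros Hq. induction n; simpl; [lra|]. pose proof (pow_le q n ltac:(lra)). nra. Qed.

Theorem theorem1p2 (X : Type) (d : X -> X -> R) (f : X -> X) (L : R) :
  is_metric d -> m_compact d -> m_continuous d f ->
  0 < L -> L < 1 / 2 ->
  lipschitz_shadowing d f L ->
  forall x : X, CR d f x <-> m_closure d (Per f) x.
Proof.
  intros Hm Hc Hf HL HL2 [dl0 [Hdl0 Hsh]] x. split.
  - intros HCR eps Heps.
    set (q := 2 * L).
    assert (Hq : 0 < q < 1) by (unfold q; lra).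
    set (dl1 := eps * (1 - q) / (4 * L)).
    assert (Hdl1 : 0 < dl1) by (unfold dl1; apply Rdiv_lt_0_compat; nra).
    assert (HLdl1 : L * dl1 = eps * (1 - q) / 4) by (unfold dl1; field; lra).
    set (dl := Rmin dl0 dl1).
    assert (Hdl : 0 < dl) by (apply Rmin_pos; lra).
    assert (Hdla : dl <= dl0) by apply Rmin_l.
    assert (HLdl : L * dl <= eps * (1 - q) / 4).
    { rewrite <- HLdl1. apply Rmult_le_compat_l; [lra| apply Rmin_r]. }
    destruct (HCR dl Hdl) as [k [xs [Hk [H0 [Hkx Hxs]]]]].
    assert (Hp : pseudo_orbit d f dl (fun i => xs (i mod k)%nat)).
    { apply cyc_pseudo; [exact Hk| |].
      - intros j Hj. apply Hxs. lia.
      - rewrite H0, <- Hkx. replace k with (S (k - 1)) at 2 by lia. apply Hxs. lia. }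
    destruct (Hsh dl Hdl Hdla _ Hp) as [z0 Hz0].
    destruct (shadow_cycle d f k _ _ z0 Hk Hz0) as [A B]. rewrite H0 in A, B.
    destruct Hm as (Hpos&Hid&Hsym&Htri).
    assert (Hz0k : d (Nat.iter k f z0) z0 <= dl * q ^ 1).
    { eapply Rle_trans. apply (Htri _ x). rewrite (Hsym x z0). simpl. unfold q. lra. }
    assert (Hch : exists g : nat * X -> X, forall ny : nat * X,
       d (Nat.iter k f (snd ny)) (snd ny) <= dl * q ^ (S (fst ny)) ->
       d (Nat.iter k f (g ny)) (g ny) <= dl * q ^ (S (S (fst ny))) /\
       d (g ny) (snd ny) <= L * dl * q ^ (S (fst ny))).
    { apply (choice (fun ny y' => d (Nat.iter k f (snd ny)) (snd ny) <= dl * q ^ (S (fst ny)) ->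
       d (Nat.iter k f y') y' <= dl * q ^ (S (S (fst ny))) /\
       d y' (snd ny) <= L * dl * q ^ (S (fst ny)))).
      intros [n y]. simpl.
      destruct (classic (d (Nat.iter k f y) y <= dl * q ^ S n)) as [Hy|Hy].
      2:{ exists y. intro; contradiction. }
      assert (Hqn : 0 < q ^ S n) by (apply pow_lt; lra).
      assert (Hqn1 : q ^ S n <= 1) by (apply pow_le1; lra).
      destruct (step d f L dl0 k (conj Hpos (conj Hid (conj Hsym Htri))) Hk Hsh (dl * q ^ S n) y)
        as [y' [E1 E2]]; [nra|nra|exact Hy|].
      exists y'. intros _. split.
      - eapply Rle_trans; [exact E1|]. right. simpl. unfold q. ring.
      - eapply Rle_trans; [exact E2|]. right. simpl. ring. }
    destruct Hch as [g Hg].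
    set (z := fix z n := match n with O => z0 | S n => g (n, z n) end).
    assert (Hzk : forall n, d (Nat.iter k f (z n)) (z n) <= dl * q ^ S n).
    { induction n as [|n IH]. exact Hz0k. apply (Hg (n, z n) IH). }
    assert (Hzs : forall n, d (z n) (z (S n)) <= (L * dl) * q ^ n).
    { intro n. rewrite Hsym. destruct (Hg (n, z n) (Hzk n)) as [_ E]. simpl in E.
      eapply Rle_trans. exact E. change (q ^ S n) with (q * q ^ n).
      assert (0 < q ^ n) by (apply pow_lt; lra).
      assert (0 < L * dl) by nra.
      assert (0 <= (L * dl * q ^ n) * (1 - q)) by (apply Rmult_le_pos; nra). nra. }
    assert (Hm : is_metric d) by exact (conj Hpos (conj Hid (conj Hsym Htri))).
    assert (Hgeo := geom_bound d z (L * dl) q Hm ltac:(nra) ltac:(lra) Hzs).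
    destruct (complete d z Hm Hc) as [p Hp'].
    { intros e He.
      destruct (pow_lt_1_zero q ltac:(rewrite Rabs_right; lra) (e * (1 - q) / (L * dl + 1)))
        as [N HN].
      { apply Rdiv_lt_0_compat; nra. }
      exists N. intros n j Hn. eapply Rle_lt_trans. apply Hgeo.
      specialize (HN n Hn). rewrite Rabs_right in HN by (apply Rle_ge, pow_le; lra).
      apply (Rmult_lt_reg_r (1 - q)); [lra|].
      unfold Rdiv. rewrite Rmult_assoc, Rinv_l, Rmult_1_r by lra.
      assert (q ^ n * (L * dl + 1) < e * (1 - q)).
      { apply (Rmult_lt_compat_r (L * dl + 1)) in HN; [|nra].
        unfold Rdiv in HN. rewrite Rmult_assoc, Rinv_l, Rmult_1_r in HN by nra. exact HN. }
      assert (0 <= q ^ n) by (apply pow_le; lra). nra. }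
    exists p. split.
    + exists k. split; [lia|].
      apply Hid. apply NNPP. intro Hne.
      set (e := d (Nat.iter k f p) p).
      assert (He : 0 < e).
      { destruct (Rle_lt_or_eq_dec 0 e (Hpos _ _)) as [h|h]; [exact h|]. exfalso. apply Hne. auto. }
      destruct (iter_cont d f Hf k p (e / 3) ltac:(lra)) as [eta [Heta Hct]].
      destruct (Hp' (Rmin eta (e / 3)) ltac:(apply Rmin_pos; lra)) as [N1 HN1].
      destruct (pow_lt_1_zero q ltac:(rewrite Rabs_right; lra) (e / 3 / (dl + 1))) as [N2 HN2].
      { apply Rdiv_lt_0_compat; lra. }
      set (n := Nat.max N1 N2).
      specialize (HN1 n ltac:(unfold n; lia)).
      specialize (HN2 (S n) ltac:(unfold n; lia)).
      rewrite Rabs_right in HN2 by (apply Rle_ge, pow_le; lra).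
      assert (Hsmall : dl * q ^ S n < e / 3).
      { apply (Rmult_lt_compat_r (dl + 1)) in HN2; [|lra].
        unfold Rdiv in HN2. rewrite (Rmult_assoc (e * / 3)), Rinv_l, Rmult_1_r in HN2 by lra.
        assert (0 <= q ^ S n) by (apply pow_le; lra). nra. }
      assert (Hm1 := Rmin_l eta (e / 3)). assert (Hm2 := Rmin_r eta (e / 3)).
      assert (C1 : d (Nat.iter k f p) (Nat.iter k f (z n)) < e / 3).
      { apply Hct. rewrite Hsym. lra. }
      assert (C2 := Hzk n).
      assert (T1 := Htri (Nat.iter k f p) (Nat.iter k f (z n)) p).
      assert (T2 := Htri (Nat.iter k f (z n)) (z n) p).
      unfold e in *. lra.
    + destruct (Hp' (eps / 4) ltac:(lra)) as [N1 HN1].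
      specialize (HN1 N1 (le_n _)).
      specialize (Hgeo N1 0%nat). simpl in Hgeo. rewrite Rmult_1_r in Hgeo.
      assert (Hb : L * dl / (1 - q) <= eps / 4).
      { apply (Rmult_le_reg_r (1 - q)); [lra|].
        unfold Rdiv. rewrite Rmult_assoc, Rinv_l, Rmult_1_r by lra. lra. }
      assert (HA : L * dl <= eps / 4) by nra.
      assert (T1 := Htri x z0 p). assert (T2 := Htri z0 (z N1) p).
      change (z 0%nat) with z0 in Hgeo.
      rewrite (Hsym x z0) in T1. lra.
  - intros Hcl dl Hdl.
    destruct (Hf x (dl / 2) ltac:(lra)) as [eta [Heta Hct]].
    destruct (Hcl (Rmin eta (dl / 2)) ltac:(apply Rmin_pos; lra)) as [y [[n [Hn Hy]] Hxy]].
    assert (Hm1 := Rmin_l eta (dl / 2)). assert (Hm2 := Rmin_r eta (dl / 2)).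
    destruct Hm as (Hpos&Hid&Hsym&Htri).
    assert (Hself : forall a, d a a = 0) by (intro a; apply Hid; reflexivity).
    assert (Hfxy : d (f x) (f y) < dl / 2) by (apply Hct; lra).
    exists n, (fun i => if Nat.eqb i 0 then x else if Nat.eqb i n then x else Nat.iter i f y).
    split; [lia|]. split; [reflexivity|]. split.
    { destruct (Nat.eqb_spec n 0); [lia|]. rewrite Nat.eqb_refl. reflexivity. }
    intros i Hi.
    destruct (Nat.eqb_spec i 0) as [->|Hi0].
    + simpl. destruct n as [|[|n]]; [lia| |].
      * simpl in Hy |- *. rewrite Hy in Hfxy.
        assert (T := Htri (f x) y x). rewrite (Hsym y x) in T. lra.
      * simpl. lra.
    + cbv beta.
      assert (e1 : (i =? 0) = false) by (apply Nat.eqb_neq; lia).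
      assert (e2 : (i =? n) = false) by (apply Nat.eqb_neq; lia).
      assert (e3 : (S i =? 0) = false) by reflexivity.
      rewrite e2, e3.
      destruct (Nat.eqb_spec (S i) n) as [E|E].
      * rewrite <- E in Hy. simpl in Hy. rewrite Hy. rewrite Hsym. lra.
      * simpl. rewrite Hself. lra.
Qed.
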